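(* Consider the system $\frac{dT}{dt}=s+r_TT\left(1-\frac{T+I}{T_{\max}}\right)-dT-\frac{bTV}{T+I}$, $\frac{dI}{dt}=r_II\left(1-\frac{T+I}{T_{\max}}\right)+\frac{bTV}{T+I}-\delta I$, $\frac{dV}{dt}=\rho R^*I-cV-\frac{bTV}{T+I}$. There exist parameter values for which ${\cal R}_0<1$ and there exist exactly two positive steady states, one stable and one unstable. There is a variation of parameters under which these two steady states coalesce in a generic fold bifurcation.
   Context: Parameters $s,r_T,T_{\max},d,b,r_I,\delta,\rho,R^*,c$ are positive constants. Let $p_0=\left(r_T-d+\sqrt{(r_T-d)^2+\frac{4sr_T}{T_{\max}}}\right)\frac{T_{\max}}{2r_T}$; the disease-free equilibrium is $(T,I,V)=(p_0,0,0)$. For parameters with $\delta>r_I(1-p_0/T_{\max})$ the basic reproductive ratio is ${\cal R}_0=\frac{b\rho R^*}{(b+c)\left(\delta-r_I(1-\frac{p_0}{T_{\max}})\right)}$. A positive steady state is a steady state with $T,I,V>0$; a generic fold bifurcation is a non-degenerate saddle-node bifurcation. *)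

(* Defs.v *)
From Stdlib Require Import Reals.
From Coquelicot Require Import Coquelicot.
Open Scope R_scope.

Record par := mkPar {
  ps : R; prT : R; pTmax : R; pd : R; pb : R;
  prI : R; pdelta : R; prho : R; pRstar : R; pc : R }.

Definition par_pos (p : par) : Prop :=
  0 < ps p /\ 0 < prT p /\ 0 < pTmax p /\ 0 < pd p /\ 0 < pb p /\
  0 < prI p /\ 0 < pdelta p /\ 0 < prho p /\ 0 < pRstar p /\ 0 < pc p.

Definition path (p q : par) (mu : R) : par :=
  mkPar (ps p + mu * ps q) (prT p + mu * prT q) (pTmax p + mu * pTmax q)
        (pd p + mu * pd q) (pb p + mu * pb q) (prI p + mu * prI q)
        (pdelta p + mu * pdelta q) (prho p + mu * prho q)
        (pRstar p + mu * pRstar q) (pc p + mu * pc q).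

Record st := St { xT : R; xI : R; xV : R }.

Definition coord (i : nat) (x : st) : R :=
  match i with 0%nat => xT x | 1%nat => xI x | _ => xV x end.

Definition vadd (x y : st) : st := St (xT x + xT y) (xI x + xI y) (xV x + xV y).
Definition vscal (t : R) (x : st) : st := St (t * xT x) (t * xI x) (t * xV x).
Definition ebasis (j : nat) : st :=
  match j with 0%nat => St 1 0 0 | 1%nat => St 0 1 0 | _ => St 0 0 1 end.
Definition dot (x y : st) : R := xT x * xT y + xI x * xI y + xV x * xV y.
Definition vzero : st := St 0 0 0.

Definition fT (p : par) (x : st) : R :=
  let T := xT x in let I := xI x in let V := xV x in
  ps p + prT p * T * (1 - (T + I) / pTmax p) - pd p * T - pb p * T * V / (T + I).
Definition fI (p : par) (x : st) : R :=
  let T := xT x in let I := xI x in let V := xV x in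
  prI p * I * (1 - (T + I) / pTmax p) + pb p * T * V / (T + I) - pdelta p * I.
Definition fV (p : par) (x : st) : R :=
  let T := xT x in let I := xI x in let V := xV x in
  prho p * pRstar p * I - pc p * V - pb p * T * V / (T + I).

Definition F (p : par) (i : nat) (x : st) : R :=
  match i with 0%nat => fT p x | 1%nat => fI p x | _ => fV p x end.

Definition Fvec (p : par) (x : st) : st := St (F p 0 x) (F p 1 x) (F p 2 x).

Definition steady (p : par) (x : st) : Prop :=
  fT p x = 0 /\ fI p x = 0 /\ fV p x = 0.

Definition positive_state (x : st) : Prop := 0 < xT x /\ 0 < xI x /\ 0 < xV x.

(* Disease-free T-value p_0 and basic reproductive ratio R_0. *)
Definition p0 (p : par) : R :=
  (prT p - pd p + sqrt ((prT p - pd p) ^ 2 + 4 * ps p * prT p / pTmax p))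
    * pTmax p / (2 * prT p).

Definition basicR0 (p : par) : R :=
  pb p * prho p * pRstar p /
    ((pb p + pc p) * (pdelta p - prI p * (1 - p0 p / pTmax p))).

Definition Jac (p : par) (x : st) (i j : nat) : R :=
  Derive (fun t => F p i (vadd x (vscal t (ebasis j)))) 0.

Definition Jv (p : par) (x : st) (v : st) : st :=
  St (Jac p x 0 0 * xT v + Jac p x 0 1 * xI v + Jac p x 0 2 * xV v)
     (Jac p x 1 0 * xT v + Jac p x 1 1 * xI v + Jac p x 1 2 * xV v)
     (Jac p x 2 0 * xT v + Jac p x 2 1 * xI v + Jac p x 2 2 * xV v).

Definition wJ (p : par) (x : st) (w : st) : st :=
  St (xT w * Jac p x 0 0 + xI w * Jac p x 1 0 + xV w * Jac p x 2 0)
     (xT w * Jac p x 0 1 + xI w * Jac p x 1 1 + xV w * Jac p x 2 1)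
     (xT w * Jac p x 0 2 + xI w * Jac p x 1 2 + xV w * Jac p x 2 2).

Definition trJ (p : par) (x : st) : R := Jac p x 0 0 + Jac p x 1 1 + Jac p x 2 2.
Definition M2J (p : par) (x : st) : R :=
  (Jac p x 0 0 * Jac p x 1 1 - Jac p x 0 1 * Jac p x 1 0)
  + (Jac p x 0 0 * Jac p x 2 2 - Jac p x 0 2 * Jac p x 2 0)
  + (Jac p x 1 1 * Jac p x 2 2 - Jac p x 1 2 * Jac p x 2 1).
Definition detJ (p : par) (x : st) : R :=
  Jac p x 0 0 * (Jac p x 1 1 * Jac p x 2 2 - Jac p x 1 2 * Jac p x 2 1)
  - Jac p x 0 1 * (Jac p x 1 0 * Jac p x 2 2 - Jac p x 1 2 * Jac p x 2 0)
  + Jac p x 0 2 * (Jac p x 1 0 * Jac p x 2 1 - Jac p x 1 1 * Jac p x 2 0).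

(* Characteristic polynomial det(lambda I - J) = l^3 - tr l^2 + M2 l - det,
   evaluated at a complex number. *)
Definition charpoly (p : par) (x : st) (l : C) : C :=
  Cplus (Cminus (Cmult l (Cmult l l)) (Cmult (RtoC (trJ p x)) (Cmult l l)))
        (Cminus (Cmult (RtoC (M2J p x)) l) (RtoC (detJ p x))).

Definition eigenvalue (p : par) (x : st) (l : C) : Prop := charpoly p x l = RtoC 0.

Definition lin_stable (p : par) (x : st) : Prop :=
  forall l : C, eigenvalue p x l -> Re l < 0.
Definition lin_unstable (p : par) (x : st) : Prop :=
  exists l : C, eigenvalue p x l /\ 0 < Re l.

(* Generic (non-degenerate) fold / saddle-node bifurcation of the family
   x' = F(P mu, x) at (x, mu0)  (Sotomayor / Kuznetsov conditions). *)
Definition generic_fold (P : R -> par) (mu0 : R) (x : st) : Prop :=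
  steady (P mu0) x /\
  (* 0 is a simple eigenvalue: char. polynomial vanishes at 0 with nonzero
     derivative there (the derivative at 0 is M2J). *)
  detJ (P mu0) x = 0 /\ M2J (P mu0) x <> 0 /\
  (forall l : C, eigenvalue (P mu0) x l -> l <> RtoC 0 -> Re l <> 0) /\
  exists v w : st,
    v <> vzero /\ w <> vzero /\
    Jv (P mu0) x v = vzero /\ wJ (P mu0) x w = vzero /\
    dot w (St (Derive (fun m => F (P m) 0 x) mu0)
              (Derive (fun m => F (P m) 1 x) mu0)
              (Derive (fun m => F (P m) 2 x) mu0)) <> 0 /\
    dot w (St (Derive_n (fun t => F (P mu0) 0 (vadd x (vscal t v))) 2 0)
              (Derive_n (fun t => F (P mu0) 1 (vadd x (vscal t v))) 2 0)
              (Derive_n (fun t => F (P mu0) 2 (vadd x (vscal t v))) 2 0)) <> 0.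

Definition state_continuous_at (y : R -> st) (mu : R) : Prop :=
  continuity_pt (fun m => xT (y m)) mu /\
  continuity_pt (fun m => xI (y m)) mu /\
  continuity_pt (fun m => xV (y m)) mu.

(* Main.v *)
Require Import Defs.
From Stdlib Require Import Reals Lra Psatz.
From Coquelicot Require Import Coquelicot.
Open Scope R_scope.


Ltac simpl0 := repeat rewrite ?Rmult_0_l, ?Rplus_0_r, ?Rmult_1_r, ?Rmult_1_l, ?Rmult_0_r, ?Rplus_0_l.
Ltac jtac := intros HN HK; unfold Jac; apply is_derive_unique;
  unfold F, fT, fI, fV, vadd, vscal, ebasis; cbn -[Rplus Rmult Rminus Rdiv];
  auto_derive; simpl0; [repeat split; auto | field; auto].

Section J.
Variables (p : par) (T I V : R).
Let N := T + I.
Let K := pTmax p.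
Lemma Jac00 : N <> 0 -> K <> 0 ->
  Jac p (St T I V) 0 0 = prT p * (1 - N/K) - prT p * T / K - pd p - pb p * V * I / N^2.
Proof. unfold N, K; jtac. Qed.
Lemma Jac01 : N <> 0 -> K <> 0 ->
  Jac p (St T I V) 0 1 = - prT p * T / K + pb p * T * V / N^2.
Proof. unfold N, K; jtac. Qed.
Lemma Jac02 : N <> 0 -> K <> 0 ->
  Jac p (St T I V) 0 2 = - pb p * T / N.
Proof. unfold N, K; jtac. Qed.
Lemma Jac10 : N <> 0 -> K <> 0 ->
  Jac p (St T I V) 1 0 = - prI p * I / K + pb p * V * I / N^2.
Proof. unfold N, K; jtac. Qed.
Lemma Jac11 : N <> 0 -> K <> 0 ->
  Jac p (St T I V) 1 1 = prI p * (1 - N/K) - prI p * I / K - pb p * T * V / N^2 - pdelta p.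
Proof. unfold N, K; jtac. Qed.
Lemma Jac12 : N <> 0 -> K <> 0 ->
  Jac p (St T I V) 1 2 = pb p * T / N.
Proof. unfold N, K; jtac. Qed.
Lemma Jac20 : N <> 0 -> K <> 0 ->
  Jac p (St T I V) 2 0 = - pb p * V * I / N^2.
Proof. unfold N, K; jtac. Qed.
Lemma Jac21 : N <> 0 -> K <> 0 ->
  Jac p (St T I V) 2 1 = prho p * pRstar p + pb p * T * V / N^2.
Proof. unfold N, K; jtac. Qed.
Lemma Jac22 : N <> 0 -> K <> 0 ->
  Jac p (St T I V) 2 2 = - pc p - pb p * T / N.
Proof. unfold N, K; jtac. Qed.
End J.


Definition cp (tr m2 det : R) (l : C) : C :=
  Cplus (Cminus (Cmult l (Cmult l l)) (Cmult (RtoC tr) (Cmult l l)))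
        (Cminus (Cmult (RtoC m2) l) (RtoC det)).

Lemma cp_parts tr m2 det a b : cp tr m2 det (a, b) = RtoC 0 ->
  a*a*a - 3*a*b*b - tr*(a*a - b*b) + m2*a - det = 0 /\
  b * (3*a*a - b*b - 2*tr*a + m2) = 0.
Proof.
intro H. unfold cp, Cplus, Cminus, Cmult, Copp, RtoC in H. simpl in H.
injection H. intros H1 H2. split; nra.
Qed.

Lemma RH tr m2 det l : cp tr m2 det l = RtoC 0 -> tr < 0 -> det < 0 -> tr*m2 - det < 0 -> Re l < 0.
Proof.
destruct l as [a b]. intros H Htr Hdet Hrh. apply cp_parts in H as [H1 H2].
simpl. destruct (Rle_or_lt 0 a) as [Ha|Ha]; [exfalso|exact Ha].
assert (Hm2 : 0 < m2) by nra.
destruct (Req_dec b 0) as [Hb|Hb].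
- subst b. assert (0 <= a*a*a) by (apply Rmult_le_pos; [apply Rmult_le_pos|]; lra).
  assert (0 <= a*a) by nra. nra.
- assert (Hb2 : b*b = 3*a*a - 2*tr*a + m2).
  { apply Rmult_integral in H2 as [H2|H2]; [contradiction|lra]. }
  assert (E : -8*a*a*a + 8*tr*a*a - 2*m2*a - 2*tr*tr*a + tr*m2 - det = 0).
  { replace (-8*a*a*a + 8*tr*a*a - 2*m2*a - 2*tr*tr*a + tr*m2 - det)
      with (a*a*a - 3*a*(b*b) - tr*(a*a - b*b) + m2*a - det) by (rewrite Hb2; ring). lra. }
  assert (0 <= a*a*a) by (apply Rmult_le_pos; [apply Rmult_le_pos|]; lra).
  assert (0 <= tr*tr*a) by (apply Rmult_le_pos; nra).
  assert (tr*a*a <= 0) by nra.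
  nra.
Qed.

Lemma cp_real tr m2 det z : z*z*z - tr*z*z + m2*z - det = 0 -> cp tr m2 det (RtoC z) = RtoC 0.
Proof.
intro H. unfold cp, Cplus, Cminus, Cmult, Copp, RtoC. simpl. f_equal; ring_simplify; try lra. 
Qed.

Lemma unstable_real tr m2 det : 0 < det -> exists l, cp tr m2 det l = RtoC 0 /\ 0 < Re l.
Proof.
intros Hd.
set (f := fun z => z*z*z - tr*z*z + m2*z - det).
set (M := 1 + Rabs tr + Rabs m2 + det).
assert (HM : 1 <= M) by (unfold M; pose proof (Rabs_pos tr); pose proof (Rabs_pos m2); lra).
assert (Hf : 0 < f M).
{ unfold f. pose proof (Rle_abs tr). pose proof (Rle_abs (-m2)). rewrite Rabs_Ropp in H0.
  pose proof (Rabs_pos tr). pose proof (Rabs_pos m2).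
  set (a := Rabs tr) in *. set (b := Rabs m2) in *.
  assert (E1 : tr*M*M <= a*M*M) by (apply Rmult_le_compat_r; [lra|]; apply Rmult_le_compat_r; lra).
  assert (E2 : -m2*M <= b*M) by (apply Rmult_le_compat_r; lra).
  assert (E3 : M*M*(M - a) >= M*(M-a)) by (assert (M - a >= 1) by (unfold M; lra); nra).
  assert (E4 : M*(M - a - b) >= 1 + det) by (unfold M at 2; nra).
  nra. }
destruct (IVT f 0 M) as [z [[Hz0 HzM] Hz]].
- intros x. unfold f. repeat first [apply continuity_pt_minus | apply continuity_pt_plus | apply continuity_pt_mult | apply continuity_pt_const; intros ? ?; reflexivity | apply continuity_pt_id].
- lra.
- unfold f. lra.
- exact Hf.
- exists (RtoC z). split. apply cp_real. exact Hz.
  simpl. destruct Hz0 as [Hz0|Hz0]; auto. subst z. unfold f in Hz. lra.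
Qed.

Definition P (c : R) : par := mkPar (3/8) (1/2) 1 (3/8) (9/5) 2 3 4 1 c.

Definition stN (c N : R) : st := St ((4*N-1)/3) ((1-N)/3) ((1-N)*(3-2*N)/(3*c)).
Definition quadN (c N : R) : R := (30*c+72)*N^2 + (15*c-126)*N + 27.

Lemma steady_stN c N : 0 < c -> 1/4 < N < 1 -> quadN c N = 0 -> steady (P c) (stN c N).
Proof.
intros Hc HN Hq. unfold quadN in Hq. unfold steady, fT, fI, fV, P, stN; simpl.
assert (E : (4*N-1)/3 + (1-N)/3 = N) by field.
rewrite E.
assert (H1 : N * ((30*c+72)*N^2 + (15*c-126)*N + 27) = 0) by (rewrite Hq; ring).
split; [|split]; field_simplify; try lra;
 try (apply Rmult_integral_contrapositive; split; lra);
 unfold Rdiv; apply Rmult_eq_0_compat_r; lra.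
Qed.


Lemma uniq x : steady (P (26/35)) x -> positive_state x ->
  x = St (1/11) (5/22) (175/242) \/ x = St (13/15) (1/30) (7/130).
Proof.
destruct x as [T I V]. unfold steady, positive_state, fT, fI, fV, P; simpl.
intros [H1 [H2 H3]] [HT [HI HV]].
set (W := 9/5*T*V/(T+I)) in *.
assert (HW : W * (T+I) = 9/5*T*V) by (unfold W; field; lra).
clearbody W.
assert (HcV : 26/35 * V = I*(3 - 2*(T+I))) by nra.
assert (HbW : W = I*(1+2*(T+I))) by nra.
assert (HT3 : (9+12*(T+I))*(3*T - 4*(T+I) + 1) = 0) by nra.
apply Rmult_integral in HT3 as [HT3|HT3]; [lra|].
assert (ET : T = 1 - 4*I) by lra.
assert (HV' : V = 35/26 * I*(3 - 2*(T+I))) by lra.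
rewrite HbW, HV' in HW.
assert (HQ : I * (26*(1+2*(T+I))*(T+I) - 63*T*(3-2*(T+I))) = 0) by nra.
apply Rmult_integral in HQ as [HQ|HQ]; [lra|].
rewrite ET in HQ.
assert (HQ2 : (22*I - 5)*(30*I - 1) = 0) by nra.
apply Rmult_integral in HQ2 as [HQ2|HQ2].
- left. assert (I = 5/22) by lra. subst I. rewrite HV', ET. f_equal; field.
- right. assert (I = 1/30) by lra. subst I. rewrite HV', ET. f_equal; field.
Qed.

Lemma D2 (f g : R -> R) (x l : R) (eps : posreal) :
  (forall t, Rabs (t - x) < eps -> is_derive f t (g t)) -> is_derive g x l -> Derive_n f 2 x = l.
Proof.
intros Hf Hg. simpl.
rewrite (Derive_ext_loc _ g).
- apply is_derive_unique; exact Hg.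
- exists eps. intros y Hy. apply is_derive_unique. apply Hf. exact Hy.
Qed.
Definition eps24 : posreal := mkposreal (1/24) ltac:(lra).
Definition hd (t : R) : R :=
  ((-8)*(5/18 + t*5) + 5*(1/3 + t*(-8)))/(1/2 - 6*t) - (1/3 + t*(-8))*(5/18 + t*5)*(-6)/(1/2 - 6*t)^2.
Ltac d2tac g :=
  apply (D2 _ g 0 _ eps24);
  [ intros t Ht; unfold eps24 in Ht; simpl in Ht; apply Rabs_def2 in Ht;
    unfold F, fT, fI, fV, vadd, vscal, P, hd; cbn -[Rplus Rmult Rminus Rdiv];
    auto_derive; [ lra | field; lra ]
  | unfold hd; auto_derive; [ repeat split; lra | field ] ].
Definition xs := St (1/3) (1/6) (5/18).
Definition vv := St (-8) 2 5.
Lemma D2_0 : Derive_n (fun t => F (P (6/5)) 0 (vadd xs (vscal t vv))) 2 0 = 192.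
Proof.
d2tac (fun t => 1/2*((-8)*(1 - (1/2 - 6*t)) + (1/3 + t*(-8))*6) - 3/8*(-8) - 9/5*hd t).
Qed.
Lemma D2_1 : Derive_n (fun t => F (P (6/5)) 1 (vadd xs (vscal t vv))) 2 0 = -192.
Proof.
d2tac (fun t => 2*(2*(1 - (1/2 - 6*t)) + (1/6 + t*2)*6) + 9/5*hd t - 3*2).
Qed.
Lemma D2_2 : Derive_n (fun t => F (P (6/5)) 2 (vadd xs (vscal t vv))) 2 0 = 240.
Proof.
d2tac (fun t => 4*1*2 - 6/5*5 - 9/5*hd t).
Qed.



Ltac ctac := repeat first [ apply continuity_pt_div | apply continuity_pt_mult | apply continuity_pt_minus | apply continuity_pt_plus | apply continuity_pt_id | (apply continuity_pt_const; intros ? ?; reflexivity) ].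
Definition Sq (mu : R) := sqrt ((1-mu)*(64-mu)).
Lemma cont_Sq mu : 0 <= mu <= 1 -> continuity_pt Sq mu.
Proof.
intros H. unfold Sq.
apply (continuity_pt_comp (fun m => (1-m)*(64-m)) sqrt).
- ctac.
- apply continuity_pt_sqrt. nra.
Qed.
Definition cc (mu : R) := 26/35 + mu * (16/35).
Definition N1 (mu : R) := (67 - 4*mu - 4*Sq mu)/(110+16*mu).
Definition N2 (mu : R) := (67 - 4*mu + 4*Sq mu)/(110+16*mu).
Definition y1 (mu : R) := stN (cc mu) (N1 mu).
Definition y2 (mu : R) := stN (cc mu) (N2 mu).
Definition pp := P (26/35).
Definition qq := mkPar 0 0 0 0 0 0 0 0 0 (16/35).

Lemma path_eq mu : path pp qq mu = P (cc mu).
Proof. unfold path, pp, qq, P, cc; simpl. f_equal; ring. Qed.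

Lemma Sq_facts mu : 0 <= mu <= 1 -> 0 <= Sq mu <= 8 /\ Sq mu * Sq mu = (1-mu)*(64-mu).
Proof.
intros H. assert (HS : Sq mu * Sq mu = (1-mu)*(64-mu)) by (unfold Sq; apply sqrt_sqrt; nra).
pose proof (sqrt_pos ((1-mu)*(64-mu))). fold (Sq mu) in H0.
split; [split|]; auto; nra.
Qed.

Lemma N1_b mu : 0 <= mu <= 1 -> 1/4 < N1 mu < 1.
Proof.
intros H. destruct (Sq_facts mu H) as [[H0 H8] HS]. unfold N1.
assert (8 * Sq mu < 79 - 16*mu) by nra.
split; [apply Rmult_lt_reg_r with (110+16*mu) | apply Rmult_lt_reg_r with (110+16*mu)]; try lra;
  field_simplify; lra.
Qed.
Lemma N2_b mu : 0 <= mu <= 1 -> 1/4 < N2 mu < 1.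
Proof.
intros H. destruct (Sq_facts mu H) as [[H0 H8] HS]. unfold N2.
split; [apply Rmult_lt_reg_r with (110+16*mu) | apply Rmult_lt_reg_r with (110+16*mu)]; try lra;
  field_simplify; lra.
Qed.
Lemma N1_q mu : 0 <= mu <= 1 -> quadN (cc mu) (N1 mu) = 0.
Proof.
intros H. destruct (Sq_facts mu H) as [_ HS].
assert (E : quadN (cc mu) (N1 mu) = 96*(Sq mu * Sq mu - (1-mu)*(64-mu))/(7*(110+16*mu)))
  by (unfold quadN, cc, N1; field; lra).
rewrite E, HS. field. lra.
Qed.
Lemma N2_q mu : 0 <= mu <= 1 -> quadN (cc mu) (N2 mu) = 0.
Proof.
intros H. destruct (Sq_facts mu H) as [_ HS].
assert (E : quadN (cc mu) (N2 mu) = 96*(Sq mu * Sq mu - (1-mu)*(64-mu))/(7*(110+16*mu)))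
  by (unfold quadN, cc, N2; field; lra).
rewrite E, HS. field. lra.
Qed.

Lemma pos_stN c N : 0 < c -> 1/4 < N < 1 -> positive_state (stN c N).
Proof. intros Hc HN. unfold positive_state, stN; simpl. split; [|split]; try lra.
apply Rdiv_lt_0_compat; [apply Rmult_lt_0_compat|]; lra. Qed.

Ltac ctac2 := repeat first [ apply continuity_pt_div | apply continuity_pt_mult | apply continuity_pt_minus | apply continuity_pt_plus | apply continuity_pt_id | (apply continuity_pt_const; intros ? ?; reflexivity) | (apply cont_Sq; lra) ].

Lemma cont_y1 mu : 0 <= mu <= 1 -> state_continuous_at y1 mu.
Proof.
intros H. pose proof (N1_b mu H). unfold state_continuous_at, y1, stN, N1, cc; simpl.
split; [|split]; ctac2; try lra.
Qed.
Lemma cont_y2 mu : 0 <= mu <= 1 -> state_continuous_at y2 mu.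
Proof.
intros H. pose proof (N2_b mu H). unfold state_continuous_at, y2, stN, N2, cc; simpl.
split; [|split]; ctac2; try lra.
Qed.



Ltac jval := first [rewrite Jac00 | rewrite Jac01 | rewrite Jac02 | rewrite Jac10 | rewrite Jac11 | rewrite Jac12 | rewrite Jac20 | rewrite Jac21 | rewrite Jac22]; simpl; [field | lra | lra].

Definition x1 := St (1/11) (5/22) (175/242).
Definition x2 := St (13/15) (1/30) (7/130).

Lemma p0_pp : p0 pp = 1.
Proof.
unfold p0, pp, P; simpl.
match goal with |- context [sqrt ?a] => replace a with ((7/8)*(7/8)) by field end.
rewrite sqrt_square by lra. field.
Qed.

Lemma stab_x1 : lin_stable pp x1.
Proof.
intros l H. unfold eigenvalue, charpoly in H.
assert (J00 : Jac pp x1 0 0 = -1849/616) by (unfold pp, x1, P; jval).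
assert (J01 : Jac pp x1 0 1 = 173/154) by (unfold pp, x1, P; jval).
assert (J02 : Jac pp x1 0 2 = -18/35) by (unfold pp, x1, P; jval).
assert (J10 : Jac pp x1 1 0 = 190/77) by (unfold pp, x1, P; jval).
assert (J11 : Jac pp x1 1 1 = -251/77) by (unfold pp, x1, P; jval).
assert (J12 : Jac pp x1 1 2 = 18/35) by (unfold pp, x1, P; jval).
assert (J20 : Jac pp x1 2 0 = -225/77) by (unfold pp, x1, P; jval).
assert (J21 : Jac pp x1 2 1 = 398/77) by (unfold pp, x1, P; jval).
assert (J22 : Jac pp x1 2 2 = -44/35) by (unfold pp, x1, P; jval).
apply (RH (trJ pp x1) (M2J pp x1) (detJ pp x1)); [exact H | ..];
unfold trJ, M2J, detJ; rewrite ?J00, ?J01, ?J02, ?J10, ?J11, ?J12, ?J20, ?J21, ?J22; lra.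
Qed.

Lemma unst_x2 : lin_unstable pp x2.
Proof.
assert (J00 : Jac pp x2 0 0 = -10703/14040) by (unfold pp, x2, P; jval).
assert (J01 : Jac pp x2 0 1 = -89/270) by (unfold pp, x2, P; jval).
assert (J02 : Jac pp x2 0 2 = -26/15) by (unfold pp, x2, P; jval).
assert (J10 : Jac pp x2 1 0 = -22/351) by (unfold pp, x2, P; jval).
assert (J11 : Jac pp x2 1 1 = -401/135) by (unfold pp, x2, P; jval).
assert (J12 : Jac pp x2 1 2 = 26/15) by (unfold pp, x2, P; jval).
assert (J20 : Jac pp x2 2 0 = -7/1755) by (unfold pp, x2, P; jval).
assert (J21 : Jac pp x2 2 1 = 554/135) by (unfold pp, x2, P; jval).
assert (J22 : Jac pp x2 2 2 = -52/21) by (unfold pp, x2, P; jval).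
destruct (unstable_real (trJ pp x2) (M2J pp x2) (detJ pp x2)) as [l [Hl Hr]].
- unfold detJ; rewrite ?J00, ?J01, ?J02, ?J10, ?J11, ?J12, ?J20, ?J21, ?J22; lra.
- exists l. split; [exact Hl | exact Hr].
Qed.

Definition ww := St 8 (-22) (-15).

Lemma Sq1 : Sq 1 = 0.
Proof. unfold Sq. replace ((1-1)*(64-1)) with 0 by ring. apply sqrt_0. Qed.
Lemma y1_1 : y1 1 = xs.
Proof. unfold y1, stN, N1, cc, xs. rewrite Sq1. f_equal; field. Qed.
Lemma y2_1 : y2 1 = xs.
Proof. unfold y2, stN, N2, cc, xs. rewrite Sq1. f_equal; field. Qed.

Lemma fold_ok : generic_fold (path pp qq) 1 (y1 1).
Proof.
rewrite y1_1. unfold generic_fold.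
replace (path pp qq 1) with (P (6/5)) by (rewrite path_eq; unfold cc; f_equal; field).
assert (J00 : Jac (P (6/5)) xs 0 0 = -5/8) by (unfold xs, P; jval).
assert (J01 : Jac (P (6/5)) xs 0 1 = 1/2) by (unfold xs, P; jval).
assert (J02 : Jac (P (6/5)) xs 0 2 = -6/5) by (unfold xs, P; jval).
assert (J10 : Jac (P (6/5)) xs 1 0 = 0) by (unfold xs, P; jval).
assert (J11 : Jac (P (6/5)) xs 1 1 = -3) by (unfold xs, P; jval).
assert (J12 : Jac (P (6/5)) xs 1 2 = 6/5) by (unfold xs, P; jval).
assert (J20 : Jac (P (6/5)) xs 2 0 = -1/3) by (unfold xs, P; jval).
assert (J21 : Jac (P (6/5)) xs 2 1 = 14/3) by (unfold xs, P; jval).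
assert (J22 : Jac (P (6/5)) xs 2 2 = -12/5) by (unfold xs, P; jval).
assert (Htr : trJ (P (6/5)) xs = -241/40) by (unfold trJ; rewrite J00, J11, J22; field).
assert (Hm2 : M2J (P (6/5)) xs = 183/40)
  by (unfold M2J; rewrite J00, J01, J02, J10, J11, J12, J20, J21, J22; field).
assert (Hdet : detJ (P (6/5)) xs = 0)
  by (unfold detJ; rewrite J00, J01, J02, J10, J11, J12, J20, J21, J22; field).
split; [|split; [|split; [|split]]].
- replace xs with (stN (6/5) (1/2)) by (unfold stN, xs; f_equal; field).
  apply steady_stN; try lra. unfold quadN; field.
- exact Hdet.
- rewrite Hm2; lra.
- intros [a b] H Hl0 Hre. simpl in Hre. subst a.
  pose proof (cp_parts _ _ _ 0 b H) as [H1 _].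
  rewrite Htr, Hdet in H1.
  assert (b = 0) by nra. subst b. apply Hl0. reflexivity.
- exists vv, ww. split; [|split; [|split; [|split; [|split]]]].
  + unfold vv, vzero; intro H; injection H; lra.
  + unfold ww, vzero; intro H; injection H; lra.
  + unfold Jv, vzero, vv; simpl. rewrite J00, J01, J02, J10, J11, J12, J20, J21, J22. f_equal; field.
  + unfold wJ, vzero, ww; simpl. rewrite J00, J01, J02, J10, J11, J12, J20, J21, J22. f_equal; field.
  + assert (T0 : Derive (fun m => F (path pp qq m) 0 xs) 1 = 0).
    { apply is_derive_unique. unfold F, fT, path, pp, qq, P, xs; simpl. auto_derive; [lra|field]. }
    assert (T1 : Derive (fun m => F (path pp qq m) 1 xs) 1 = 0).
    { apply is_derive_unique. unfold F, fI, path, pp, qq, P, xs; simpl. auto_derive; [lra|field]. }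
    assert (T2 : Derive (fun m => F (path pp qq m) 2 xs) 1 = -8/63).
    { apply is_derive_unique. unfold F, fV, path, pp, qq, P, xs; simpl. auto_derive; [lra|field]. }
    rewrite T0, T1, T2. unfold dot, ww; simpl. lra.
  + rewrite D2_0, D2_1, D2_2. unfold dot, ww; simpl. lra.
Qed.

Lemma x1_eq : x1 = stN (26/35) (7/22).
Proof. unfold x1, stN; f_equal; field. Qed.
Lemma x2_eq : x2 = stN (26/35) (9/10).
Proof. unfold x2, stN; f_equal; field. Qed.
Lemma Sq0 : Sq 0 = 8.
Proof. unfold Sq. replace ((1-0)*(64-0)) with (8*8) by ring. apply sqrt_square; lra. Qed.

Theorem theorem4 :
  exists p : par,
    par_pos p /\
    prI p * (1 - p0 p / pTmax p) < pdelta p /\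
    basicR0 p < 1 /\
    exists x1 x2 : st,
      x1 <> x2 /\
      steady p x1 /\ positive_state x1 /\
      steady p x2 /\ positive_state x2 /\
      (forall x : st, steady p x -> positive_state x -> x = x1 \/ x = x2) /\
      lin_stable p x1 /\ lin_unstable p x2 /\
      exists (q : par) (mu0 : R) (y1 y2 : R -> st),
        0 < mu0 /\
        (forall mu, 0 <= mu <= mu0 -> par_pos (path p q mu)) /\
        y1 0 = x1 /\ y2 0 = x2 /\
        (forall mu, 0 <= mu <= mu0 ->
           steady (path p q mu) (y1 mu) /\ positive_state (y1 mu) /\
           steady (path p q mu) (y2 mu) /\ positive_state (y2 mu) /\
           state_continuous_at y1 mu /\ state_continuous_at y2 mu) /\
        (forall mu, 0 <= mu < mu0 -> y1 mu <> y2 mu) /\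
        y1 mu0 = y2 mu0 /\
        generic_fold (path p q) mu0 (y1 mu0).
Proof.
exists pp.
split; [unfold par_pos, pp, P; simpl; lra|].
split; [rewrite p0_pp; unfold pp, P; simpl; lra|].
split; [unfold basicR0; rewrite p0_pp; unfold pp, P; simpl;
        apply (Rmult_lt_reg_r ((9/5 + 26/35) * (3 - 2 * (1 - 1/1)))); [lra|];
        field_simplify; lra|].
exists x1, x2.
split; [unfold x1, x2; intro H; injection H; lra|].
split; [rewrite x1_eq; apply steady_stN; try lra; unfold quadN; field|].
split; [unfold positive_state, x1; simpl; lra|].
split; [rewrite x2_eq; apply steady_stN; try lra; unfold quadN; field|].
split; [unfold positive_state, x2; simpl; lra|].
split; [exact uniq|].
split; [exact stab_x1|].
split; [exact unst_x2|].
exists qq, 1, y1, y2.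
split; [lra|].
split; [intros mu Hmu; rewrite path_eq; unfold par_pos, P, cc; simpl; lra|].
split; [unfold y1, N1, cc; rewrite Sq0, x1_eq; f_equal; field|].
split; [unfold y2, N2, cc; rewrite Sq0, x2_eq; f_equal; field|].
split.
{ intros mu Hmu. rewrite path_eq.
  assert (Hc : 0 < cc mu) by (unfold cc; lra).
  split; [apply steady_stN; [exact Hc | apply N1_b; exact Hmu | apply N1_q; exact Hmu]|].
  split; [apply pos_stN; [exact Hc | apply N1_b; exact Hmu]|].
  split; [apply steady_stN; [exact Hc | apply N2_b; exact Hmu | apply N2_q; exact Hmu]|].
  split; [apply pos_stN; [exact Hc | apply N2_b; exact Hmu]|].
  split; [apply cont_y1; exact Hmu | apply cont_y2; exact Hmu]. }
split.
{ intros mu Hmu H. unfold y1, y2, stN in H. injection H. intros _ HI _.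
  assert (HS : 0 < Sq mu) by (unfold Sq; apply sqrt_lt_R0; nra).
  unfold N1, N2 in HI.
  assert (E : (67 - 4*mu - 4*Sq mu)/(110+16*mu) = (67 - 4*mu + 4*Sq mu)/(110+16*mu)) by lra.
  apply (f_equal (fun z => z * (110+16*mu))) in E.
  field_simplify in E; lra. }
split; [rewrite y1_1, y2_1; reflexivity|].
exact fold_ok.
Qed.
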